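(* Let $B$ be a Boolean algebra with more than two elements, regarded as a commutative semiring with $+=\vee$, $\cdot=\wedge$, zero the least element $0$ and unit the greatest element $1$. Let $G=\langle g\mid g^n=1\rangle$ be a finite cyclic group of order $n\ge 2$, and let $BG$ be the group semiring of $G$ over $B$. Then for every $h\in G$ there exist $\alpha,\beta\in BG\setminus G$ such that $\alpha\beta=h$.
   Context: For a commutative semiring $S$ with unit $1$ and a multiplicative group $G$, the group semiring $SG$ is the set of finite formal sums $\sum_i s_i g_i$ ($s_i\in S$, $g_i\in G$), i.e. finitely supported functions $G\to S$, with coefficientwise addition $\sum_i s_ig_i+\sum_i t_ig_i=\sum_i(s_i+t_i)g_i$ and multiplication $\big(\sum_i s_ig_i\big)\big(\sum_j t_jh_j\big)=\sum_{k\in G}\Big(\sum_{g_ih_j=k}s_it_j\Big)k$. The group $G$ is identified with the subset $\{1\cdot g: g\in G\}\subseteq SG$. *)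

(* Defs.v *)
From HB Require Import structures.
From mathcomp Require Import all_boot all_order all_algebra.
Set Implicit Arguments. Unset Strict Implicit. Unset Printing Implicit Defensive.
Import Order.TTheory GRing.Theory.

(* Boolean algebra B: a complemented distributive lattice with top/bottom
   (ctbDistrLatticeType), regarded as a semiring with + = join, * = meet,
   0 = \bot, 1 = \top.
   Finite group G written additively (finZmodType); the cyclic group of
   order n is 'Z_n (for 1 < n).  Since G is finite, the group semiring BG
   is the type of all functions G -> B. *)

Section GroupSemiring.
Context {d : Order.disp_t} (B : ctbDistrLatticeType d) (G : finZmodType).

Local Open Scope order_scope.

Definition gsmul (a b : {ffun G -> B}) : {ffun G -> B} :=
  [ffun k => \join_(x : G) \join_(y : G | (x + y)%R == k) (a x `&` b y)].

Definition gselem (g : G) : {ffun G -> B} :=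
  [ffun k => if k == g then \top else \bot].

Definition in_group (a : {ffun G -> B}) : Prop := exists g : G, a = gselem g.

End GroupSemiring.

(* Main.v *)
Require Import Defs.
From HB Require Import structures.
From mathcomp Require Import all_boot all_order all_algebra.
Import Order.TTheory GRing.Theory.

Theorem theorem2p5p1 (d : Order.disp_t) (B : ctbDistrLatticeType d) (n : nat) :
  (exists x y z : B, [/\ x != y, x != z & y != z]) ->
  (1 < n)%N ->
  forall h : 'Z_n,
  exists alpha beta : {ffun 'Z_n -> B},
    [/\ ~ in_group alpha, ~ in_group beta & gsmul alpha beta = gselem B h].
Proof.
Local Open Scope order_scope.
move=> [x [y [z [xy xz yz]]]] n1 h.
have [a [a0 a1]] : exists a : B, a != \bot%O /\ a != \top%O.
  case: (eqVneq x \bot%O) => [ex|]; last first.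
    case: (eqVneq x \top%O) => [et|]; last by exists x.
    case: (eqVneq y \bot%O) => [ey|]; first by exists z; rewrite -ey -et; split; rewrite eq_sym.
    by exists y; rewrite -et; split; rewrite // eq_sym.
  case: (eqVneq y \top%O) => [ey|]; last by exists y; rewrite -ex; split; rewrite // eq_sym.
  by exists z; rewrite -ex -ey; split; rewrite eq_sym.
set g : 'Z_n := 1%R.
have g0 : g != 0%R by apply: oner_neq0.
set alpha : {ffun 'Z_n -> B} :=
  [ffun k => if k == 0%R then a else if k == g then (~` a)%O else \bot%O].
set beta : {ffun 'Z_n -> B} :=
  [ffun k => if k == h then a else if k == (h - g)%R then (~` a)%O else \bot%O].
exists alpha, beta; split.
- move=> [c E]; move: (congr1 (fun f : {ffun 'Z_n -> B} => f 0%R) E) => {E} /=; rewrite /gselem /alpha !ffunE eqxx.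
  case: ifP => _ E. by move: a1; rewrite E eqxx. by move: a0; rewrite E => /negP; apply; apply/eqP.
- move=> [c E]; move: (congr1 (fun f : {ffun 'Z_n -> B} => f h) E) => {E} /=; rewrite /gselem /beta !ffunE eqxx.
  case: ifP => _ E. by move: a1; rewrite E eqxx. by move: a0; rewrite E => /negP; apply; apply/eqP.
apply/ffunP => k; rewrite /gsmul /gselem !ffunE.
have inner : forall u : 'Z_n, \join_(v : 'Z_n | (u + v)%R == k) (alpha u `&` beta v)%O
    = (alpha u `&` beta (k - u)%R)%O.
  move=> u; apply: big_pred1 => v /=.
  by rewrite -(inj_eq (addrI (- u)%R)) addKr addrC.
under eq_bigr => u _ do rewrite inner.
rewrite (bigD1 0%R) //= (bigD1 g) //= big1; last first.
  by move=> u /andP [u0 ug]; rewrite ffunE (negbTE u0) (negbTE ug) meet0x.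
rewrite !ffunE eqxx (negbTE g0) eqxx joinx0 subr0.
have Hh : (h - g != h)%R by rewrite -subr_eq0 addrAC subrr add0r oppr_eq0.
case: (eqVneq k h) => [->|kh].
  by rewrite (negbTE Hh) eqxx !meetxx Order.CTBDistrLatticeTheory.joinxC.
have -> : ((k - g)%R == (h - g)%R) = false by rewrite (inj_eq (addIr _)) (negbTE kh).
case: ifP => _; case: ifP => _; rewrite ?meetx0 ?joinx0 ?join0x //.
- by rewrite [~` a `&` a]meetC Order.CTBDistrLatticeTheory.meetxC joinxx.
- by rewrite Order.CTBDistrLatticeTheory.meetxC.
- by rewrite meetC Order.CTBDistrLatticeTheory.meetxC.
Qed.
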